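(* Let $n\ge 2$ and let $\overrightarrow{K_{1,n}}$ be an orientation of the star $K_{1,n}$. Then $\overrightarrow{K_{1,n}}$ is $\{0,2\}$-antimagic if and only if its center is neither a source nor a sink.
   Context: An oriented graph $\overrightarrow{G}$ is a directed graph obtained from a simple undirected graph by giving each edge one direction. For vertices $u,v$, $d(u,v)$ is the length of a shortest directed path from $u$ to $v$ ($d(u,u)=0$, and $d(u,v)=\infty$ if there is no such path). Let $\partial=\max\{d(u,v)<\infty : u,v\in V(\overrightarrow{G})\}$. A distance set is a nonempty $D\subseteq\{0,1,\dots,\partial\}$. The $D$-neighborhood of $u$ is $N_D(u)=\{v : d(u,v)\in D\}$. For a bijection $f:V(\overrightarrow{G})\to\{1,\dots,|V(\overrightarrow{G})|\}$, the $D$-weight of $u$ is $\omega_D(u)=\sum_{v\in N_D(u)} f(v)$. $\overrightarrow{G}$ is $D$-antimagic if $D\subseteq\{0,\dots,\partial\}$ (in particular, $\{0,2\}$-antimagic requires $\partial\ge 2$) and there is such a bijection $f$ with all $D$-weights pairwise distinct. The center of $\overrightarrow{K_{1,n}}$ is its vertex of degree $n$; a source is a vertex of in-degree $0$ and a sink a vertex of out-degree $0$. *)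

(* Defs.v *)
From mathcomp Require Import all_boot.
Set Implicit Arguments. Unset Strict Implicit. Unset Printing Implicit Defensive.

Section Oriented.
Variables (T : finType) (arc : rel T).

Fixpoint walkn (k : nat) (u v : T) : bool :=
  match k with
  | 0 => u == v
  | k'.+1 => [exists w, arc u w && walkn k' w v]
  end.

Definition dist_is (k : nat) (u v : T) : bool :=
  walkn k u v && [forall j : 'I_k, ~~ walkn j u v].

(* partial = max of finite distances (all finite distances are < #|T|) *)
Definition diam : nat :=
  \max_(u : T) \max_(v : T) \max_(k < #|T| | dist_is k u v) k.

Definition Dweight (D : pred nat) (f : T -> nat) (u : T) : nat :=
  \sum_(v : T | [exists k : 'I_#|T|, D k && dist_is k u v]) f v.

Definition labeling (f : T -> nat) : Prop :=
  injective f /\ forall v, 0 < f v <= #|T|.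

Definition antimagic (D : pred nat) : Prop :=
  (exists k, D k) /\ (forall k, D k -> k <= diam) /\
  exists f, labeling f /\ injective (Dweight D f).

Definition source (u : T) : bool := [forall v, ~~ arc v u].
Definition sink (u : T) : bool := [forall v, ~~ arc u v].
End Oriented.

(* Orientation of the star K_{1,n}: vertices option 'I_n, center None,
   leaves Some i; o i = true means the edge is oriented center -> leaf i. *)
Definition star_arc (n : nat) (o : 'I_n -> bool) : rel (option 'I_n) :=
  fun x y => match x, y with
             | None, Some i => o i
             | Some i, None => ~~ o i
             | _, _ => false
             end.

Definition D02 : pred nat := fun k => (k == 0) || (k == 2).

(* Main.v *)
Require Import Defs.
From mathcomp Require Import all_boot.
From mathcomp Require Import zify.
Set Implicit Arguments.

Section S.
Variables (n : nat) (o : 'I_n -> bool).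
Notation T := (option (ordinal n)).
Notation arc := (star_arc o).
Definition inleaf (x : option 'I_n) := if x is Some i then ~~ o i else false.
Definition outleaf (x : option 'I_n) := if x is Some i then o i else false.

Lemma walk1 u v : walkn arc 1 u v = arc u v.
Proof.
apply/existsP/idP => [[w /andP[h /eqP <-]] //|h]; by exists v; rewrite h eqxx.
Qed.

Lemma walk2 u v : walkn arc 2 u v = inleaf u && outleaf v.
Proof.
apply/existsP/idP.
  move=> [w /andP[h]]; move/(@idP (walkn arc 1 w v)); rewrite walk1.
  by case: u h => [i|]; case: w => [j|]; case: v => [k|] //= -> .
case: u => [i|] //=; case: v => [k|] /andP[hi hk] //.
by exists None; rewrite /= hi /=; apply/(@idP (walkn arc 1 None (Some k))); by rewrite walk1.
Qed.

Lemma dist2 u v : inleaf u && outleaf v -> dist_is arc 2 u v.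
Proof.
move=> h; rewrite /dist_is walk2 h /=.
apply/forallP => -[[|[|//]] hj].
  by case: u v h => [i|] [k|] //= /andP[a b]; apply/negP => /eqP[e]; move: a b; rewrite e => /negPf ->.
rewrite walk1; case: u v h => [i|] [k|] //=; by rewrite andbF.
Qed.

Lemma diam_le1 : source arc None || sink arc None -> diam arc <= 1.
Proof.
move=> hs.
apply/bigmax_leqP => u _; apply/bigmax_leqP => v _.
apply/bigmax_leqP => k; rewrite /dist_is.
case: k => [[|[|k]] hk] //= /andP[hw _].
move: hw => /existsP[w /andP[h1 /existsP[w' /andP[h2 _]]]].
case/orP: hs => /forallP hs.
  case: u w w' h1 h2 (hs u) => [i|] [j|] [l|] //=. - by move=> ->. - by move=> ->.
case: u w w' h1 h2 (hs w') => [i|] [j|] [l|] //=. - by move=> _ ->. - by move=> ->.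
Qed.

Lemma nbhd m u v : 2 < m ->
  [exists k : 'I_m, D02 k && dist_is arc k u v] = (v == u) || (inleaf u && outleaf v).
Proof.
move=> hT.
apply/existsP/idP.
  move=> [k /andP[/orP[/eqP hk|/eqP hk]]]; rewrite /dist_is hk.
    by move=> /andP[/eqP -> _]; rewrite eqxx.
  by rewrite walk2 => /andP[-> _]; rewrite orbT.
case/orP.
  move=> /eqP ->; exists (Ordinal (ltn_trans (isT : 0 < 2) hT)).
  by rewrite /D02 /dist_is /= eqxx /=; apply/forallP => -[].
move=> h; exists (Ordinal hT); rewrite /D02 /dist_is walk2 h /=.
apply/forallP => -[[|[|//]] hj].
  by case: u v h => [i|] [k|] //= /andP[a b]; apply/negP => /eqP[e]; move: a b; rewrite e => /negPf ->.
rewrite walk1; case: u v h => [i|] [k|] //=; by rewrite andbF.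
Qed.
End S.

Theorem mainTheorem4 (n : nat) (o : 'I_n -> bool) :
  2 <= n ->
  (antimagic (star_arc o) D02 <->
   (~~ source (star_arc o) None /\ ~~ sink (star_arc o) None)).
Proof.
move=> hn.
have hT : 2 < #|{: option 'I_n}| by rewrite card_option card_ord.
split.
  move=> [_ [hd _]]; have := hd 2 isT => h2.
  have hns : ~~ (source (star_arc o) None || sink (star_arc o) None).
    by apply/negP => /diam_le1 h; move: (leq_trans h2 h).
  by move: hns; rewrite negb_or => /andP[-> ->].
move=> [/forallPn [v hv] /forallPn [w hw]].
rewrite negbK in hv hw.
case: v hv => [i0|] // hi0; case: w hw => [j0|] // hj0.
simpl in hi0, hj0; rewrite ?negbK in hi0 hj0.
split; first by exists 0.
split.
  move=> k /orP[/eqP->|/eqP->] //.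
  have hd : dist_is (star_arc o) 2 (Some i0) (Some j0) by apply: dist2; rewrite /= hi0 hj0.
  rewrite /diam; apply: leq_trans _ (leq_bigmax (Some i0)).
  apply: leq_trans _ (leq_bigmax (Some j0)).
  exact: (leq_bigmax_cond (Ordinal hT) hd).
pose f (x : option 'I_n) := match x with None => j0.+1 | Some i => if i == j0 then n.+1 else i.+1 end.
have fb x : 0 < f x <= n.+1.
  case: x => [i|] /=; last by have := ltn_ord j0; lia.
  by case: eqP => _ //; have := ltn_ord i; lia.
have finj : injective f.
  have H0 := ltn_ord j0.
  case=> [i|] [j|] //=.
  - have Hi := ltn_ord i; have Hj := ltn_ord j.
    case: eqP => hi; case: eqP => hj e; try (congruence);
      (try by exfalso; lia); congr Some; apply/val_inj => /=; lia.
  - have Hi := ltn_ord i.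
    case: eqP => hi e; try (exfalso; lia).
    by exfalso; apply: hi; apply/val_inj => /=; lia.
  - have Hj := ltn_ord j.
    case: eqP => hj e; try (exfalso; lia).
    by exfalso; apply: hj; apply/val_inj => /=; lia.
exists f; split.
  by split => // x; rewrite card_option card_ord.
pose S := \sum_(v | outleaf o v) f v.
have hS : n.+1 <= S.
  rewrite /S (bigD1 (Some j0)) //= eqxx; exact: leq_addr.
have hW u : Dweight (star_arc o) D02 f u = f u + (if inleaf o u then S else 0).
  rewrite /Dweight (eq_bigl (fun v => (v == u) || (inleaf o u && outleaf o v))); last first.
    by move=> v; rewrite nbhd.
  case: (boolP (inleaf o u)) => hu /=.
    rewrite (bigD1 u) /=; last by rewrite eqxx.
    congr (_ + _); apply: eq_bigl => v.
    case: eqP => [->|]; rewrite ?andbF ?andbT //=.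
    by case: u hu => [i|] //= /negPf ->.
  by rewrite (big_pred1 u) ?addn0 // => v; rewrite orbF.
move=> x y; rewrite !hW => e; apply: finj.
have := fb x; have := fb y.
by case: (inleaf o x) e; case: (inleaf o y); lia.
Qed.
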